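(* Let $n,m$ be positive integers, let ${\cal P}$ be an additive hereditary graph class with ${\cal P}\subseteq Free(K_n)$, and let ${\cal Q}$ be a hereditary graph class whose complement class $\overline{{\cal Q}}$ is additive, with ${\cal Q}\subseteq Free(\overline{K}_m)$. Then there exists a constant $\tau=\tau({\cal P},{\cal Q})$ such that for every graph $G=(V,E)\in{\cal P}\circ{\cal Q}$ and every subset $B\subseteq V$ with $G[B]\in{\cal P}$, at least one of the following holds: (a) there is a subset $A\subseteq V$ such that $G[A]\in{\cal P}$, $G[V\setminus A]\in{\cal Q}$, and $|A\setminus B|\le\tau$; (b) there is a subset $C\subseteq V$ such that $G[C]\in{\cal P}$, $|C|=|B|+1$, and $|B\setminus C|\le\tau$.
   Context: All graphs are finite and simple; classes are closed under isomorphism. $K_n$ is the complete graph on $n$ vertices and $\overline{K}_m$ the edgeless graph on $m$ vertices. $Free(Y)$ is the class of graphs containing no induced subgraph isomorphic to a graph in $Y$. A class is hereditary if closed under vertex deletion, additive if closed under disjoint union; $\overline{{\cal Q}}=\{\overline{G}\mid G\in{\cal Q}\}$. $G[U]$ is the subgraph induced by $U$. ${\cal P}\circ{\cal Q}$ is the class of graphs $G$ whose vertex set can be partitioned into $V_1,V_2$ with $G[V_1]\in{\cal P}$, $G[V_2]\in{\cal Q}$. *)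

(* Defs.v *)
(* Finite simple graphs are pairs (T : finType, e : rel T)
   with e symmetric and irreflexive. A graph class is a predicate on such pairs. *)
From mathcomp Require Import all_boot.
Set Implicit Arguments. Unset Strict Implicit. Unset Printing Implicit Defensive.

Definition simple_graph (T : finType) (e : rel T) : Prop :=
  symmetric e /\ irreflexive e.

Definition gclass := forall T : finType, rel T -> Prop.

Definition induced (T : finType) (e : rel T) (U : {set T}) :
  rel {x : T | x \in U} := fun x y => e (val x) (val y).
Arguments induced [T] e U.

Definition giso (T1 T2 : finType) (e1 : rel T1) (e2 : rel T2) : Prop :=
  exists f : T1 -> T2, bijective f /\ forall x y, e2 (f x) (f y) = e1 x y.

Definition iso_closed (P : gclass) : Prop :=
  forall (T1 T2 : finType) (e1 : rel T1) (e2 : rel T2),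
    giso e1 e2 -> P T1 e1 -> P T2 e2.

Definition hereditary (P : gclass) : Prop :=
  forall (T : finType) (e : rel T) (v : T),
    simple_graph e -> P T e -> P _ (induced e [set~ v]).

Definition gunion (T1 T2 : finType) (e1 : rel T1) (e2 : rel T2) : rel (T1 + T2) :=
  fun x y => match x, y with
             | inl a, inl b => e1 a b
             | inr a, inr b => e2 a b
             | _, _ => false
             end.

Definition additive (P : gclass) : Prop :=
  forall (T1 T2 : finType) (e1 : rel T1) (e2 : rel T2),
    simple_graph e1 -> simple_graph e2 -> P T1 e1 -> P T2 e2 ->
    P _ (gunion e1 e2).

Definition gcompl (T : finType) (e : rel T) : rel T :=
  fun x y => (x != y) && ~~ e x y.

Definition cclass (Q : gclass) : gclass :=
  fun T e => exists e' : rel T, simple_graph e' /\ Q T e' /\ e =2 gcompl e'.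

Definition Kn (n : nat) : rel 'I_n := fun x y => x != y.
Definition Kbar (m : nat) : rel 'I_m := fun _ _ => false.

Definition has_induced (T : finType) (e : rel T) (S : finType) (h : rel S) : Prop :=
  exists U : {set T}, giso h (induced e U).

Definition subclass_free (P : gclass) (S : finType) (h : rel S) : Prop :=
  forall (T : finType) (e : rel T), simple_graph e -> P T e -> ~ has_induced e h.

Definition in_comp (P Q : gclass) (T : finType) (e : rel T) : Prop :=
  exists V1 : {set T}, P _ (induced e V1) /\ Q _ (induced e (~: V1)).

(* Main.v *)
Require Import Defs.
From mathcomp Require Import all_boot zify.


Definition clique {T : finType} (e : rel T) (U : {set T}) := {in U &, forall x y, x != y -> e x y}.
Definition indep {T : finType} (e : rel T) (U : {set T}) := {in U &, forall x y, e x y = false}.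

Lemma ramsey (T : finType) (e : rel T) (se : simple_graph e) a b (S : {set T}) : 2 ^ (a + b) <= #|S| ->
  (exists U : {set T}, U \subset S /\ #|U| = a /\ clique e U) \/
  (exists U : {set T}, U \subset S /\ #|U| = b /\ indep e U).
Proof.
case: se => sym irr.
elim: a b S => [|a IHa] b S.
  move=> _; left; exists set0; rewrite sub0set cards0; split=> //; split=> //.
  by move=> x y; rewrite in_set0.
elim: b S => [|b IHb] S.
  move=> _; right; exists set0; rewrite sub0set cards0; split=> //; split=> //.
  by move=> x y; rewrite in_set0.
move=> hS.
have: 0 < #|S| by have := expn_gt0 2 (a.+1 + b.+1); lia.
case/card_gt0P=> v vS.
set N := [set x in S | e v x].
set M := [set x in S | (x != v) && ~~ e v x].
have NS : N \subset S by apply/subsetP=> x; rewrite inE => /andP[].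
have MS : M \subset S by apply/subsetP=> x; rewrite inE => /andP[].
have hNM : #|N| + #|M| = #|S| - 1.
  rewrite (cardsD1 v S) vS add1n subn1 /= -cardsUI.
  have -> : N :&: M = set0.
    by apply/setP=> x; rewrite !inE; case: (e v x); rewrite ?andbF ?andbT.
  rewrite cards0 addn0; apply: eq_card => x; rewrite !inE.
  case: (x =P v) => [->|_]; first by rewrite irr andbF. by case: (x \in S); case: (e v x).
have hp : 2 ^ (a.+1 + b.+1) = 2 * 2 ^ (a + b.+1) by rewrite addSn expnS.
have hp2 : 2 ^ (a + b.+1) = 2 ^ (a.+1 + b) by rewrite addnS addSn.
have [hN|hM] : 2 ^ (a + b.+1) <= #|N| \/ 2 ^ (a.+1 + b) <= #|M| by lia.
- case: (IHa _ _ hN) => [[U [sU [cU clU]]]|[U [sU [cU iU]]]].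
  + left; exists (v |: U).
    have vU : v \notin U.
      by apply/negP=> /(subsetP sU); rewrite inE irr andbF.
    split; first by rewrite subUset sub1set vS (subset_trans sU).
    rewrite cardsU1 vU cU; split=> //.
    move=> x y; rewrite !inE => /orP[/eqP->|xU] /orP[/eqP->|yU]; rewrite ?eqxx //.
    * by move=> _; have := subsetP sU y yU; rewrite inE => /andP[].
    * by move=> _; rewrite sym; have := subsetP sU x xU; rewrite inE => /andP[].
    * exact: clU.
  + right; exists U; split=> //; exact: (subset_trans sU).
- case: (IHb _ hM) => [[U [sU [cU clU]]]|[U [sU [cU iU]]]].
  + left; exists U; split=> //; exact: (subset_trans sU).
  + right; exists (v |: U).
    have vU : v \notin U.
      by apply/negP=> /(subsetP sU); rewrite inE eqxx andbF.
    split; first by rewrite subUset sub1set vS (subset_trans sU).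
    rewrite cardsU1 vU cU; split=> //.
    have hv z : z \in U -> e v z = false.
      by move=> zU; have := subsetP sU z zU; rewrite inE => /and3P[_ _ /negbTE].
    move=> x y; rewrite !inE => /orP[/eqP->|xU] /orP[/eqP->|yU].
    * exact: irr.
    * exact: hv.
    * by rewrite sym; apply: hv.
    * exact: iU.
Qed.


Lemma embed (T : finType) (W U : {set T}) : U \subset W ->
  exists U' : {set {x | x \in W}}, exists g : 'I_#|U| -> {y | y \in U'},
   bijective g /\ (forall i, val (val (g i)) \in U) /\
   (forall i j, val (val (g i)) = val (val (g j)) -> i = j).
Proof.
move=> sUW.
pose U' := [set y : {x | x \in W} | val y \in U].
have cU : #|U| = #|{: {y | y \in U'}}|.
  rewrite card_sig -(card_imset (mem U') val_inj).
  apply: eq_card => x.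
  apply/idP/imsetP => [xU|[y yU ->]]; last by move: yU; rewrite inE.
  have xW : x \in W by apply: (subsetP sUW).
  by exists (Sub x xW); rewrite // inE.
pose g i := enum_val (cast_ord cU i).
have ginj : injective g.
  by move=> i j /enum_val_inj /cast_ord_inj.
exists U', g; split. apply: inj_card_bij => //. exact: (eq_leq (esym (etrans (card_ord _) cU))).
split; first by move=> i; have := valP (g i); rewrite inE.
by move=> i j /val_inj /val_inj /ginj.
Qed.

Lemma hasK (T : finType) (e : rel T) (W U : {set T}) : simple_graph e ->
  U \subset W -> {in U &, forall x y, x != y -> e x y} ->
  has_induced (induced e W) (@Kn #|U|).
Proof.
case=> _ irr sUW cl; have [U' [g [bg [gU gi]]]] := @embed T W U sUW.
exists U', g; split=> // x y; rewrite /induced /Kn.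
case: (x =P y) => [->|nxy]; first exact: irr.
apply: cl; rewrite ?gU //; apply/eqP => /gi; exact: nxy.
Qed.

Lemma hasKbar (T : finType) (e : rel T) (W U : {set T}) :
  U \subset W -> {in U &, forall x y, e x y = false} ->
  has_induced (induced e W) (@Kbar #|U|).
Proof.
move=> sUW ind; have [U' [g [bg [gU gi]]]] := @embed T W U sUW.
exists U', g; split=> // x y; rewrite /induced /Kbar; exact: ind.
Qed.


Lemma simple_induced (T : finType) (e : rel T) (W : {set T}) :
  simple_graph e -> simple_graph (induced e W).
Proof. by case=> sym irr; split=> [x y|x]; [apply: sym|apply: irr]. Qed.

Lemma del_iso (T : finType) (e : rel T) (W : {set T}) (v : T) (vW : v \in W) :
  giso (induced (induced e W) [set~ (Sub v vW : {x | x \in W})]) (induced e (W :\ v)).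
Proof.
pose v' : {x | x \in W} := Sub v vW.
have fP : forall y : {y | y \in [set~ v']}, val (val y) \in W :\ v.
  move=> y; rewrite !inE (valP (val y)) andbT; apply/eqP => h.
  have := valP y; rewrite !inE => /negP; apply; apply/eqP; apply: val_inj; exact: h.
pose f y : {x | x \in W :\ v} := Sub (val (val y)) (fP y).
exists f; split; last by [].
apply: inj_card_bij.
  by move=> x y /(congr1 val) /= /val_inj /val_inj.
rewrite !card_sig.
have -> : #|[pred x | x \in W :\ v]| = #|W :\ v| by apply: eq_card.
have -> : #|[pred x | x \in [set~ v']]| = #|[set~ v']| by apply: eq_card.
rewrite cardsC1 card_sig (cardsD1 v W) vW.
by rewrite add1n.
Qed.

Lemma heredS (P : gclass) : hereditary P -> iso_closed P ->
  forall (T : finType) (e : rel T), simple_graph e ->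
  forall k (W C : {set T}), C \subset W -> #|W :\: C| = k ->
  P _ (induced e W) -> P _ (induced e C).
Proof.
move=> hP iP T e se k; elim: k => [|k IH] W C sCW.
  move/eqP; rewrite cards_eq0 setD_eq0 => sWC.
  by have -> : C = W by apply/eqP; rewrite eqEsubset sCW sWC.
move=> cW PW.
have : 0 < #|W :\: C| by rewrite cW.
case/card_gt0P=> v; rewrite inE => /andP[vC vW].
have PW' : P _ (induced e (W :\ v)).
  apply: (iP _ _ _ _ (@del_iso T e W v vW)).
  exact: (hP _ _ _ (@simple_induced T e W se) PW).
apply: (IH (W :\ v)) => //.
  apply/subsetP=> x xC; rewrite !inE (subsetP sCW) // andbT.
  by apply/eqP=> h; move: vC; rewrite -h xC.
have : #|W :\: C| = (v \in W :\: C) + #|(W :\: C) :\ v| by rewrite -cardsD1.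
rewrite inE vC vW cW add1n => -[->]; apply: eq_card => x; rewrite !inE.
by rewrite andbCA.
Qed.

Theorem lemma3 (n m : nat) (P Q : gclass) :
  0 < n -> 0 < m ->
  iso_closed P -> iso_closed Q ->
  additive P -> hereditary P -> subclass_free P (@Kn n) ->
  hereditary Q -> additive (cclass Q) -> subclass_free Q (@Kbar m) ->
  exists tau : nat,
    forall (T : finType) (e : rel T), simple_graph e ->
    in_comp P Q e ->
    forall B : {set T}, P _ (induced e B) ->
      (exists A : {set T}, P _ (induced e A) /\ Q _ (induced e (~: A)) /\
                           #|A :\: B| <= tau) \/
      (exists C : {set T}, P _ (induced e C) /\ #|C| = #|B| + 1 /\
                           #|B :\: C| <= tau).
Proof.
move=> n0 m0 iP iQ aP hP fP hQ aQ fQ.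
exists (2 ^ (n + m)).
move=> T e se [V1 [PV1 QV1]] B PB.
have small : #|B :&: ~: V1| < 2 ^ (n + m).
  rewrite ltnNge; apply/negP => h.
  case: (@ramsey T e se n m _ h) => [[U [sU [cU clU]]]|[U [sU [cU iU]]]].
  - apply: (fP _ _ (@simple_induced T e B se) PB); rewrite -cU.
    apply: (@hasK T e B U se _ clU); apply: (subset_trans sU); exact: subsetIl.
  - apply: (fQ _ _ (@simple_induced T e (~: V1) se) QV1); rewrite -cU.
    apply: (@hasKbar T e (~: V1) U _ iU); apply: (subset_trans sU); exact: subsetIr.
case: (leqP #|V1 :\: B| (2 ^ (n + m))) => hV.
  by left; exists V1.
right.
have : #|B :&: ~: V1|.+1 <= #|V1 :\: B| by lia.
case/card_geqP => s [us ss subs].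
pose D := [set x in s].
have DV : D \subset V1 :\: B by apply/subsetP => x; rewrite inE => /subs.
exists ((B :&: V1) :|: D).
split.
  apply: (@heredS P hP iP T e se _ V1 _ _ (erefl _) PV1).
  rewrite subUset subsetIr; apply: (subset_trans DV); exact: subsetDl.
split.
  rewrite cardsU.
  have -> : B :&: V1 :&: D = set0.
    apply/setP => x; rewrite !inE; apply/negP => /andP[/andP[xB _] xD].
    by move: (subs x xD); rewrite !inE xB.
  have cD : #|D| = size s by rewrite cardsE; apply/card_uniqP.
  have cB := cardsID V1 B; rewrite setDE in cB.
  rewrite cards0 cD ss; lia.
apply: leq_trans (ltnW small); apply: subset_leq_card; apply/subsetP => x.
by rewrite !inE negb_or => /andP[/andP[]]; case: (x \in B) => //=; case: (x \in V1).
Qed.
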